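(* Let $q\ge2$ be a prime power, $d\ge6$ and $1\le j\le d$. (i) $|Q_j(i)|>|Q_j(i+1)|$ for all $0\le i\le d-1$, except possibly when $q=2$, $i=d-1$, and ($j=d$ or $j$ is even). (ii) If $j$ is odd, then $Q_j(1)\le Q_j(i)$ for all $0\le i\le d$. (iii) If $j$ is even, then $Q_j(d-j+2)\le Q_j(i)$ for all $0\le i\le d$. (iv) $|Q_j(1)|>|Q_j(i)|$ for all $2\le i\le d$.
   Context: Let $b=-q$. For integers $m\ge0$ and $l$, ${m\brack l}_b=\prod_{t=1}^{l}\frac{b^{m-t+1}-1}{b^t-1}$ for $l\ge0$ and $0$ for $l<0$. The Hermitian forms graph $Q_q(d,j)$ has as vertices the $d\times d$ Hermitian matrices over $\mathbb F_{q^2}$, two being adjacent iff their difference has rank $j$. Its eigenvalues are $Q_j(i)$, $0\le i\le d$, where $$Q_j(i)=(-1)^j\sum_{h=0}^{\min\{j,d-i\}}(-q)^{\binom{j-h}{2}+hd}{d-h\brack d-j}_b{d-i\brack h}_b;$$ $Q_j(0)$ is the degree (largest eigenvalue) of $Q_q(d,j)$. *)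

(* Defs.v *)
From mathcomp Require Import all_boot all_order all_algebra.
Set Implicit Arguments. Unset Strict Implicit. Unset Printing Implicit Defensive.
Import Order.TTheory GRing.Theory Num.Theory.
Local Open Scope ring_scope.

Definition gbin (b : rat) (m l : nat) : rat :=
  \prod_(1 <= t < l.+1) ((b ^+ (m - t + 1)%N - 1) / (b ^+ t - 1)).

(* Eigenvalue Q_j(i) of the Hermitian forms graph Q_q(d, j), with b = -q. *)
Definition Qeig (q d j i : nat) : rat :=
  let b : rat := - (q%:R) in
  (-1) ^+ j *
  \sum_(0 <= h < (minn j (d - i)).+1)
     b ^+ ('C(j - h, 2) + h * d)%N * gbin b (d - h) (d - j) * gbin b (d - i) h.

Definition prime_power (q : nat) : Prop :=
  exists p k : nat, prime p /\ (0 < k)%N /\ q = (p ^ k)%N.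

(* Main.v *)
Require Import Defs.
From mathcomp Require Import all_boot all_order all_algebra zify ring lra.
Import Order.TTheory GRing.Theory Num.Theory.
Local Open Scope ring_scope.
Set Implicit Arguments. Unset Strict Implicit.

Definition Pn (b : rat) (N k : nat) : rat := \prod_(1 <= t < k.+1) (b ^+ (N - t + 1) - 1).
Definition Dn (b : rat) (k : nat) : rat := \prod_(1 <= t < k.+1) (b ^+ t - 1).

Lemma gbinE b N k : gbin b N k = Pn b N k / Dn b k.
Proof. by rewrite /gbin /Pn /Dn prodf_div. Qed.

Lemma Pn0 b N : Pn b N 0 = 1.
Proof. by rewrite /Pn big_geq. Qed.
Lemma Dn0 b : Dn b 0 = 1.
Proof. by rewrite /Dn big_geq. Qed.

Lemma PnSr b N k : (k < N)%N -> Pn b N k.+1 = Pn b N k * (b ^+ (N - k) - 1).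
Proof.
move=> hk; rewrite /Pn big_nat_recr //=.
by have -> : (N - k.+1 + 1 = N - k)%N by lia.
Qed.

Lemma PnSl b N k : Pn b N.+1 k.+1 = (b ^+ N.+1 - 1) * Pn b N k.
Proof.
rewrite /Pn big_nat_recl //=.
have -> : (N.+1 - 1 + 1 = N.+1)%N by lia.
by congr (_ * _).
Qed.

Lemma DnS b k : Dn b k.+1 = Dn b k * (b ^+ k.+1 - 1).
Proof. by rewrite /Dn big_nat_recr. Qed.

Lemma Pnn b N : Pn b N N = Dn b N.
Proof.
elim: N => [|N IH]; first by rewrite Pn0 Dn0.
by rewrite PnSl IH DnS mulrC.
Qed.

Section Nz.
Variable b : rat.
Hypothesis hb : forall t, (0 < t)%N -> b ^+ t - 1 != 0.

Lemma Dn_neq0 k : Dn b k != 0.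
Proof.
elim: k => [|k IH]; first by rewrite Dn0 oner_neq0.
by rewrite DnS mulf_neq0 // hb.
Qed.

Lemma Pn_neq0 N k : Pn b N k != 0.
Proof.
rewrite /Pn prodf_seq_neq0; apply/allP => t _ /=; apply: hb; lia.
Qed.

Lemma gbin_neq0 N k : gbin b N k != 0.
Proof. by rewrite gbinE mulf_neq0 ?invr_eq0 ?Pn_neq0 ?Dn_neq0. Qed.

Lemma gbin0 N : gbin b N 0 = 1.
Proof. by rewrite gbinE Pn0 Dn0 divr1. Qed.

Lemma gbinnn N : gbin b N N = 1.
Proof. by rewrite gbinE Pnn divff // Dn_neq0. Qed.

Lemma gbin_pascal N h : (h < N)%N ->
  gbin b N.+1 h.+1 = gbin b N h.+1 + b ^+ (N - h) * gbin b N h.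
Proof.
move=> hh; rewrite !gbinE PnSl PnSr // DnS.
have hD := Dn_neq0 h; have hD1 : b ^+ h.+1 - 1 != 0 by apply: hb.
have -> : b ^+ N.+1 = b ^+ (N - h) * b ^+ h.+1.
  by rewrite -exprD; congr (_ ^+ _); lia.
field. by rewrite hD hD1.
Qed.

Lemma gbin_ratio m j : gbin b (m + j).+1 m * (b ^+ j.+1 - 1) = gbin b (m + j) m * (b ^+ (m + j).+1 - 1).
Proof.
case: m => [|k]; first by rewrite !gbin0 !add0n.
rewrite !gbinE PnSl PnSr; last by lia.
have -> : (k.+1 + j - k = j.+1)%N by lia.
rewrite addSn.
ring.
Qed.
End Nz.

Definition gb (b : rat) (n h : nat) : rat := if (h <= n)%N then gbin b n h else 0.
Definition G (b : rat) (m j n : nat) : rat :=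
  (-1) ^+ j * \sum_(0 <= h < j.+1)
     b ^+ ('C(j - h, 2) + h * (m + j)) * gbin b (m + j - h) m * gb b n h.

Lemma Qeig_G q d j i : (j <= d)%N -> Qeig q d j i = G (- q%:R) (d - j) j (d - i).
Proof.
move=> hjd; rewrite /Qeig /G; congr (_ * _).
set n := (d - i)%N.
have hmin : ((minn j n).+1 <= j.+1)%N by rewrite ltnS geq_minl.
rewrite [RHS](big_cat_nat (leq0n _) hmin) /=.
rewrite [X in _ = _ + X]big1_seq ?addr0; last first.
  move=> h /andP[_]; rewrite mem_index_iota => /andP[h1 h2].
  rewrite /gb ifF ?mulr0 //; apply/negbTE; rewrite -ltnNge; lia.
apply: eq_big_nat => h /andP[_ hh].
have hhn : (h <= n)%N by lia.
have hhj : (h <= j)%N by lia.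
rewrite /gb hhn.
have -> : (d - j + j = d)%N by lia.
by [].
Qed.

Section Rec.
Variable b : rat.
Hypothesis hb : forall t, (0 < t)%N -> b ^+ t - 1 != 0.

Lemma gb0 n : gb b n 0 = 1.
Proof. by rewrite /gb leq0n gbin0. Qed.

Lemma gb_pascal n h : gb b n.+1 h.+1 = gb b n h.+1 + b ^+ (n - h) * gb b n h.
Proof.
rewrite /gb.
case: (ltngtP h n) => hn.
- rewrite ltnS (ltnW hn); exact: gbin_pascal.
- by rewrite ltnNge hn /= mulr0 addr0.
- subst h; rewrite ltnSn subnn expr0 mul1r add0r !gbinnn //.
Qed.

Lemma G_rec m j n :
  G b m j.+1 n.+1 = G b m j.+1 n - b ^+ (m + j.+1 + n) * G b m j n.
Proof.
set c := fun h => b ^+ ('C(j.+1 - h, 2) + h * (m + j.+1)) * gbin b (m + j.+1 - h) m.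
set T := fun h => b ^+ ('C(j - h, 2) + h * (m + j)) * gbin b (m + j - h) m * gb b n h.
have key : \sum_(0 <= h < j.+2) c h * gb b n.+1 h =
   \sum_(0 <= h < j.+2) c h * gb b n h + b ^+ (m + j.+1 + n) * \sum_(0 <= h < j.+1) T h.
  rewrite big_nat_recl // [in RHS]big_nat_recl // !gb0 -addrA; congr (_ + _).
  rewrite mulr_sumr -big_split /=; apply: eq_bigr => h _.
  rewrite gb_pascal mulrDr; congr (_ + _).
  rewrite /c /T /gb; case: (leqP h n) => hhn; last by rewrite !mulr0.
  have -> : (m + j.+1 - h.+1 = m + j - h)%N by lia.
  have -> : (j.+1 - h.+1 = j - h)%N by lia.
  have E : ('C(j - h, 2) + h.+1 * (m + j.+1) + (n - h) = m + j.+1 + n + ('C(j - h, 2) + h * (m + j)))%N by nia.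
  rewrite !mulrA -exprD -E !exprD; ring.
rewrite /G; rewrite /c /T in key; rewrite key exprS; ring.
Qed.
End Rec.

Definition r0 (b : rat) (m k : nat) : rat :=
  1 + b ^+ m.+1 * (b ^+ k - 1) / (b ^+ (m + k) - 1).
Definition rho (b : rat) (m j n : nat) : rat := G b m j n.+1 / G b m j n.

Section Base.
Variable b : rat.
Hypothesis hb : forall t, (0 < t)%N -> b ^+ t - 1 != 0.
Hypothesis hb0 : b != 0.

Lemma G0n m n : G b m 0 n = 1.
Proof.
rewrite /G big_nat1 expr0 mul1r !addn0 !subn0 (gbinnn hb) gb0 mulr1.
by rewrite bin0n expr0.
Qed.

Lemma Gj0 m j : G b m j 0 = (-1) ^+ j * (b ^+ 'C(j, 2) * gbin b (m + j) m).
Proof.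
rewrite /G big_nat_recl // big1 ?addr0; last first.
  by move=> h _; rewrite /gb /= mulr0.
by rewrite gb0 mulr1 subn0 mul0n addn0 subn0.
Qed.

Lemma Gj0_neq0 m j : G b m j 0 != 0.
Proof.
rewrite Gj0 !mulf_neq0 ?gbin_neq0 ?expf_neq0 //.
Qed.

Lemma GS0 m j : G b m j.+1 0 * (b ^+ j.+1 - 1) = - b ^+ j * (b ^+ (m + j).+1 - 1) * G b m j 0.
Proof.
rewrite !Gj0 binS bin1 exprD addnS.
have := gbin_ratio b m j => e.
rewrite exprS.
transitivity ((-1) * (-1) ^+ j * (b ^+ 'C(j, 2) * b ^+ j) * (gbin b (m + j).+1 m * (b ^+ j.+1 - 1))).
  ring.
rewrite e; ring.
Qed.

Lemma Gj1 m j : G b m j.+1 1 = r0 b m j.+1 * G b m j.+1 0.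
Proof.
rewrite G_rec // addn0.
have hG := Gj0_neq0 m j.
have hd : b ^+ j.+1 - 1 != 0 by apply: hb.
have hd2 : b ^+ (m + j).+1 - 1 != 0 by apply: hb.
have hbj : b ^+ j != 0 by rewrite expf_neq0.
have e : G b m j 0 = - G b m j.+1 0 * (b ^+ j.+1 - 1) / (b ^+ j * (b ^+ (m + j).+1 - 1)).
  rewrite mulNr GS0; field; apply/andP; split; assumption.
rewrite e /r0 addnS !exprS exprD.
field; rewrite hbj andbT -exprD -exprS; exact: hd2.
Qed.

Lemma G1n m n : G b m 1 n = (1 - b ^+ (m + n).+1) / (b - 1).
Proof.
have hb1 : b - 1 != 0 by have := hb (isT : (0 < 1)%N); rewrite expr1.
elim: n => [|n IH].
  have := GS0 m 0; rewrite G0n Gj0 expr0 mulN1r expr1 mul1r addn0 mulr1.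
  move=> e; apply: (mulIf hb1); rewrite e mulfVK //; ring.
rewrite G_rec // IH G0n addnS addn0 exprS.
rewrite [in RHS]addnS !exprS; field; exact: hb1.
Qed.

Lemma rho_rec m j n :
  G b m j n != 0 -> G b m j.+1 n != 0 -> G b m j.+1 n.+1 != 0 ->
  rho b m j.+1 n.+1 = 1 + b * rho b m j n * (rho b m j.+1 n - 1) / rho b m j.+1 n.
Proof.
move=> hC hA hB; rewrite /rho.
have eA : G b m j.+1 n = G b m j.+1 n.+1 + b ^+ (m + j.+1 + n) * G b m j n.
  by rewrite (G_rec hb m j n) subrK.
rewrite (G_rec hb m j n.+1).
move: hA; rewrite eA => hA.
rewrite addnS exprS.
field. by rewrite hC hA hB.
Qed.
End Base.

Lemma prop_step (Q r' r : rat) : 2 <= Q -> (2 < r' \/ r' < -1) -> (2 < r \/ r < -1) ->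
  (2 < r' -> 1 + (- Q) * r' * (r - 1) / r < -1) /\
  (r' < -1 -> 2 < 1 + (- Q) * r' * (r - 1) / r).
Proof.
move=> hQ hr' hr.
have hr0 : r != 0 by apply/eqP => e; rewrite e in hr; case: hr; lra.
have ht : r * r^-1 = 1 by rewrite mulfV.
have hf : 1/2 < (r - 1) / r.
  rewrite mulrBl mulfV //.
  case: hr => hr.
    have : 0 < r^-1 by rewrite invr_gt0; lra.
    nra.
  have : r^-1 < 0 by rewrite invr_lt0; lra.
  nra.
set f := (r - 1) / r in hf *.
rewrite -mulrA -/f; clearbody f.
split => h.
- have h1 : 4 < Q * r' by nra.
  have : 2 < (Q * r') * f by nra.
  rewrite !mulNr; lra.
- have h1 : 2 <= - (Q * r') by nra.
  have : 1 < (- (Q * r')) * f by nra.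
  rewrite !mulNr; lra.
Qed.

Ltac nz := repeat (apply/andP; split); apply/eqP; lra.

Section R0.
Variable Q : rat.
Hypothesis hQ : 2 <= Q.
Hypothesis hQ23 : Q = 2 \/ 3 <= Q.

Lemma Qpos k : 0 < Q ^+ k.
Proof. apply: exprn_gt0. (have := hQ); lra. Qed.

Lemma Qpow_le l k : (l <= k)%N -> Q ^+ l <= Q ^+ k.
Proof. by move=> h; apply: ler_weXn2l => //; (have := hQ); lra. Qed.

Lemma Qpow_ge1 k : 1 <= Q ^+ k.
Proof. by have := Qpow_le (leq0n k); rewrite expr0. Qed.

Lemma Qpow_geQ k : (0 < k)%N -> Q <= Q ^+ k.
Proof. by move=> h; have := Qpow_le h; rewrite expr1. Qed.

Lemma Qpow_geQ2 k : (1 < k)%N -> Q * Q <= Q ^+ k.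
Proof. by move=> h; have := Qpow_le h; rewrite expr2. Qed.

Lemma Qpow_geQ3 k : (2 < k)%N -> Q * Q * Q <= Q ^+ k.
Proof. by move=> h; have := Qpow_le h; rewrite !exprS expr0 mulr1 mulrA. Qed.

Lemma bpow_odd k : odd k -> (- Q) ^+ k = - Q ^+ k.
Proof. by move=> h; rewrite exprNn -signr_odd h expr1 mulN1r. Qed.

Lemma bpow_even k : ~~ odd k -> (- Q) ^+ k = Q ^+ k.
Proof. by move=> h; rewrite exprNn -signr_odd (negbTE h) expr0 mul1r. Qed.

Lemma norm_bpow k : `|(- Q) ^+ k| = Q ^+ k.
Proof. by rewrite normrX normrN ger0_norm //; (have := hQ); lra. Qed.

Lemma hbQ t : (0 < t)%N -> (- Q) ^+ t - 1 != 0.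
Proof.
move=> ht; have h := Qpow_geQ ht.
case: (boolP (odd t)) => o.
  rewrite bpow_odd //; apply/eqP => e; (have := hQ); lra.
rewrite bpow_even //; apply/eqP => e; (have := hQ); lra.
Qed.

Lemma hbQ0 : (- Q) != 0.
Proof. by rewrite oppr_eq0; apply/eqP => e; (have := hQ); lra. Qed.

Lemma r0E m j : (0 < j)%N ->
  r0 (- Q) m j = 1 - Q + Q * ((- Q) ^+ m - 1) / ((- Q) ^+ m * (- Q) ^+ j - 1).
Proof.
move=> hj; have hd : (- Q) ^+ m * (- Q) ^+ j - 1 != 0.
  by rewrite -exprD; apply: hbQ; lia.
rewrite /r0 exprS exprD. field. exact: hd.
Qed.

Definition eps (m j : nat) := Q * ((- Q) ^+ m - 1) / ((- Q) ^+ m * (- Q) ^+ j - 1).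

Lemma eps_le m j c : (0 < j)%N -> 0 <= c ->
  Q * (Q ^+ m + 1) <= c * (Q ^+ m * Q ^+ j - 1) -> `|eps m j| <= c.
Proof.
move=> hj hc hh; have hQ' := hQ; rewrite /eps.
have hy1 := Qpow_ge1 m; have hzQ := Qpow_geQ hj.
have hyz : 2 <= Q ^+ m * Q ^+ j by nra.
have hden : Q ^+ m * Q ^+ j - 1 <= `|(- Q) ^+ m * (- Q) ^+ j - 1|.
  have := lerB_dist ((- Q) ^+ m * (- Q) ^+ j) 1.
  by rewrite normrM !norm_bpow normr1.
have hnum : `|(- Q) ^+ m - 1| <= Q ^+ m + 1.
  have := ler_normB ((- Q) ^+ m) 1.
  by rewrite norm_bpow normr1.
rewrite normrM normfV normrM (ger0_norm (x := Q)); last lra.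
have hp : 0 < `|(- Q) ^+ m * (- Q) ^+ j - 1| by lra.
rewrite ler_pdivrMr //.
have h0 : 0 <= `|(- Q) ^+ m - 1| by apply: normr_ge0.
nra.
Qed.

Lemma eps_small m j : (0 < m)%N -> ((2 < j)%N \/ (j = 2%N /\ 3 <= Q)) ->
  `|eps m j| <= 1/2.
Proof.
move=> hm hj; have hQ' := hQ.
have hy := Qpow_geQ hm.
have hj0 : (0 < j)%N by case: hj => [|[->]] //; lia.
apply: eps_le => //.
set y := Q ^+ m in hy *.
case: hj => [hj|[-> hQ3]].
  have hz := Qpow_geQ3 hj; set z := Q ^+ j in hz *.
  have h1 : 4 * Q <= Q * Q * Q by nra.
  have h2 : 4 * Q * y <= y * z by nra.
  nra.
rewrite expr2.
have hQy : 0 <= Q * y by nra.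
have h2 : 3 * Q * y <= y * (Q * Q) by nra.
have h3 : Q * Q <= Q * y by nra.
have h4 : 3 * Q <= Q * Q by nra.
nra.
Qed.
Lemma div_neg1 (a d : rat) : 0 < a -> d < 0 -> a / d < 0.
Proof. move=> ha hd; have : d^-1 < 0 by rewrite invr_lt0. nra. Qed.
Lemma div_neg2 (a d : rat) : a < 0 -> 0 < d -> a / d < 0.
Proof. move=> ha hd; have : 0 < d^-1 by rewrite invr_gt0. nra. Qed.

Lemma eps_m0 j : eps 0 j = 0.
Proof. by rewrite /eps expr0 subrr mulr0 mul0r. Qed.

Lemma eps_neg m j : (0 < m)%N -> odd j -> eps m j < 0.
Proof.
move=> hm hj; have hQ' := hQ; rewrite /eps (bpow_odd hj).
have hy := Qpow_geQ hm; have hz := Qpow_geQ (k:=j) (odd_gt0 hj).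
case: (boolP (odd m)) => om.
  rewrite (bpow_odd om); apply: div_neg2; first nra.
  set y := Q ^+ m in hy *; set z := Q ^+ j in hz *; nra.
rewrite (bpow_even om); apply: div_neg1; first nra.
set y := Q ^+ m in hy *; set z := Q ^+ j in hz *; nra.
Qed.

Lemma eps_Q2_j2 m : Q = 2 -> (0 < m)%N -> eps m 2 < 1 /\ (~~ odd m -> eps m 2 <= 1/2).
Proof.
move=> e2 hm; have hy := Qpow_geQ hm; rewrite /eps (bpow_even (k:=2)) // expr2.
case: (boolP (odd m)) => om; [rewrite (bpow_odd om) | rewrite (bpow_even om)];
  set y := Q ^+ m in hy *; rewrite e2 in hy *.
  split => //.
  have hd : 0 < 4 * y + 1 by lra.
  have -> : 2 * (- y - 1) / (- y * (2 * 2) - 1) = 2 * (y + 1) / (4 * y + 1).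
    field; apply/andP; split; apply/eqP; lra.
  rewrite ltr_pdivrMr //; lra.
have hd : 0 < y * (2 * 2) - 1 by lra.
split; [rewrite ltr_pdivrMr // | move=> _; rewrite ler_pdivrMr //]; lra.
Qed.
Lemma r0Ee m j : (0 < j)%N -> r0 (- Q) m j = 1 - Q + eps m j.
Proof. by move=> hj; rewrite r0E. Qed.

Lemma r0_cases m j : (0 < j)%N ->
  [\/ m = 0%N, (0 < m)%N /\ odd j, (0 < m)%N /\ `|eps m j| <= 1/2 /\ (3 <= Q \/ ~~ odd j)
     | [/\ (0 < m)%N, Q = 2 & j = 2%N]].
Proof.
move=> hj; case: m => [|m]; first by constructor 1.
case: (boolP (odd j)) => oj; first by constructor 2.
have hj2 : (2 <= j)%N by move: hj oj; case: j => [|[|j]].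
case: (ltngtP j 2) => h; first lia.
  constructor 3; split => //; split; last by right.
  by apply: eps_small => //; left.
have hQ3 := hQ23.
case: hQ3 => hQ3; first by constructor 4.
constructor 3; split => //; split; last by left.
by apply: eps_small => //; right.
Qed.
Lemma r0_neg m j : (0 < j)%N -> r0 (- Q) m j < 0.
Proof.
move=> hj; have hQ' := hQ; rewrite r0Ee //.
case: (r0_cases m hj) => [->|[hm oj]|[hm [he _]]|[hm e2 ->]].
- rewrite eps_m0; lra.
- have := eps_neg hm oj; lra.
- have := ler_norm (eps m j); lra.
- have [h _] := eps_Q2_j2 e2 hm; lra.
Qed.

Lemma r0_Q m j : (0 < j)%N -> ~ (Q = 2 /\ j = 2%N /\ odd m) -> Q * r0 (- Q) m j <= -1.
Proof.
move=> hj hn; have hQ' := hQ; rewrite r0Ee //.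
case: (r0_cases m hj) => [->|[hm oj]|[hm [he _]]|[hm e2 ej]].
- rewrite eps_m0; nra.
- have := eps_neg hm oj; nra.
- have := ler_norm (eps m j); nra.
- subst j; case: (boolP (odd m)) => om; first by exfalso; apply: hn.
  have [_ h] := eps_Q2_j2 e2 hm; have := h om; rewrite e2; lra.
Qed.

Lemma r0_lt m j : (0 < j)%N -> (3 <= Q \/ (0 < m)%N /\ odd j) -> r0 (- Q) m j < -1.
Proof.
move=> hj hh; have hQ' := hQ; rewrite r0Ee //.
case: hh => [hQ3|[hm oj]]; last by have := eps_neg hm oj; lra.
case: (r0_cases m hj) => [->|[hm oj]|[hm [he _]]|[hm e2 ej]].
- rewrite eps_m0; lra.
- have := eps_neg hm oj; lra.
- have := ler_norm (eps m j); lra.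
- lra.
Qed.

Lemma r0_special m : Q = 2 -> odd m ->
  r0 (- Q) m 3 <= -1 /\ 2 < 1 + (- Q) * r0 (- Q) m 2 * (r0 (- Q) m 3 - 1) / r0 (- Q) m 3.
Proof.
move=> e2 om; have hQ' := hQ.
have hm : (0 < m)%N by apply: odd_gt0.
have h3 := eps_neg hm (isT : odd 3).
split; first by rewrite r0Ee //; lra.
have hy := Qpow_geQ hm.
rewrite !r0Ee // /eps (bpow_odd om) (bpow_odd (k := 3)) // (bpow_even (k := 2)) //.
set y := Q ^+ m in hy *.
rewrite e2 in hy *.
have -> : (2 : rat) ^+ 3 = 8 by rewrite !exprS expr0; lra.
have -> : (2 : rat) ^+ 2 = 4 by rewrite !exprS expr0; lra.
have -> : 1 - 2 + 2 * (- y - 1) / (- y * 4 - 1) = (1 - 2 * y) / (4 * y + 1).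
  field; nz.
have -> : 1 - 2 + 2 * (- y - 1) / (- y * - 8 - 1) = - (10 * y + 1) / (8 * y - 1).
  field; nz.
have -> : - 2 * ((1 - 2 * y) / (4 * y + 1)) * (- (10 * y + 1) / (8 * y - 1) - 1) / (- (10 * y + 1) / (8 * y - 1))
   = 36 * y * (2 * y - 1) / ((4 * y + 1) * (10 * y + 1)).
  field; nz.
have hd : 0 < (4 * y + 1) * (10 * y + 1) by nra.
suff : 1 < 36 * y * (2 * y - 1) / ((4 * y + 1) * (10 * y + 1)) by lra.
rewrite ltr_pdivlMr //; nra.
Qed.
End R0.

Definition pos (j n : nat) : bool := if (j <= n)%N then ~~ odd j else odd n.

Lemma posS j n : pos j.+1 n.+1 = ~~ pos j n.
Proof. by rewrite /pos ltnS; case: (j <= n)%N => //=; rewrite negbK. Qed.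

Lemma E2gen (Q r' r : rat) : 0 < Q -> Q * r' <= -1 -> r < 0 -> 2 < 1 + (- Q) * r' * (r - 1) / r.
Proof.
move=> hQ h1 hr.
have ht : r * r^-1 = 1 by rewrite mulfV //; apply/eqP; lra.
have hi : r^-1 < 0 by rewrite invr_lt0.
have -> : 1 + (- Q) * r' * (r - 1) / r = 1 + (- (Q * r')) * (1 - r^-1).
  rewrite mulNr -mulrA mulrBl ht; ring.
nra.
Qed.

Lemma E4gen (Q r' r : rat) : 0 < Q -> r' < 0 -> r < 0 -> (Q * r' <= -1 \/ r <= -1) ->
  1 < `| r * (1 + (- Q) * r' * (r - 1) / r)|.
Proof.
move=> hQ h1 hr hh.
have hr0 : r != 0 by apply/eqP; lra.
have -> : r * (1 + (- Q) * r' * (r - 1) / r) = r + (- (Q * r')) * (r - 1).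
  by field.
have hs : 0 < - (Q * r') by nra.
rewrite ler0_norm; last nra.
case: hh => hh; nra.
Qed.

Section Main.
Variable q : nat.
Hypothesis hq : (2 <= q)%N.
Local Notation Q := (q%:R : rat).
Local Notation b := (- (q%:R : rat)).

Lemma hQ : 2 <= Q.
Proof. by rewrite (ler_nat _ 2 q). Qed.
Lemma hQ23 : Q = 2 \/ 3 <= Q.
Proof.
case: (ltngtP q 2) => h; first lia.
  by right; rewrite (ler_nat _ 3 q).
by left; rewrite h.
Qed.
Lemma hQ0 : 0 < Q.
Proof. have := hQ; lra. Qed.

Let hb := hbQ hQ.
Let hb0 := hbQ0 hQ.

Definition Inv m j n := G b m j n != 0 /\ (pos j n -> 2 < rho b m j n) /\ (~~ pos j n -> rho b m j n < -1).

Lemma rho0 m j : rho b m j.+1 0 = r0 b m j.+1.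
Proof. by rewrite /rho (Gj1 hb hb0) mulfK // (Gj0_neq0 hb hb0). Qed.

Lemma Gnext m j n : G b m j n != 0 -> G b m j n.+1 = rho b m j n * G b m j n.
Proof. by move=> h; rewrite /rho mulfVK. Qed.

Lemma G1_neq0 m n : G b m 1 n != 0.
Proof.
rewrite (G1n hb) mulf_neq0 // ?invr_eq0.
  by rewrite -oppr_eq0 opprB; apply: hb.
by have := hb (isT : (0 < 1)%N); rewrite expr1.
Qed.

Lemma rho1 m n : rho b m 1 n = r0 b (m + n) 1.
Proof.
have hb1 : b - 1 != 0 by have := hb (isT : (0 < 1)%N); rewrite expr1.
have h1 : 1 - b ^+ (m + n).+1 != 0 by rewrite -oppr_eq0 opprB; apply: hb.
rewrite /rho !(G1n hb) /r0 addnS addn1 exprS.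
field; rewrite hb1 h1 !andbT; exact: hb.
Qed.

Lemma rho_ne0 m j n : Inv m j n -> rho b m j n != 0.
Proof.
move=> [_ [p n']]; apply/eqP => e; rewrite e in p n'.
by case: (boolP (pos j n)) => h; [have := p h | have := n' h]; lra.
Qed.

Lemma inv_all m j n : Inv m j.+1 n.+1.
Proof.
have hQ' := hQ.
elim: j n => [|j IHj] n.
  split; first exact: G1_neq0.
  rewrite /pos /=; split => // _.
  rewrite rho1; apply: (r0_lt hQ hQ23) => //; right; split => //; lia.
elim: n => [|n IHn].
  have hG0 := Gj0_neq0 hb hb0 m j.+2.
  have hG0' := Gj0_neq0 hb hb0 m j.+1.
  have hr2 := r0_neg hQ hQ23 m (isT : (0 < j.+2)%N).
  have hr1 := r0_neg hQ hQ23 m (isT : (0 < j.+1)%N).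
  have hG1 : G b m j.+2 1 != 0.
    by rewrite (Gj1 hb hb0) mulf_neq0 //; apply/eqP; lra.
  split => //; rewrite /pos /=; split => // _.
  rewrite (rho_rec hb hG0' hG0 hG1) !rho0.
  case: (boolP [&& q == 2%N, j.+1 == 2%N & odd m]) => hs.
    case/and3P: hs => /eqP eq2 /eqP ej om.
    have -> : j.+2 = 3%N by lia.
    have -> : j.+1 = 2%N by lia.
    have eQ : Q = 2 by rewrite eq2.
    by have [_ h] := r0_special hQ hQ23 eQ om.
  apply: E2gen => //; first exact: hQ0.
  apply: (r0_Q hQ hQ23) => // [[eQ [ej om]]].
  move/negP: hs; apply; apply/and3P; split => //; last by apply/eqP.
  by apply/eqP; apply/eqP; rewrite -(eqr_nat rat) eQ.
have [hC [pC nC]] := IHj n.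
have [hA [pA nA]] := IHn.
have hB : G b m j.+2 n.+2 != 0.
  by rewrite (Gnext hA) mulf_neq0 // rho_ne0 //.
split => //.
rewrite (rho_rec hb hC hA hB) posS.
have hr' : 2 < rho b m j.+1 n.+1 \/ rho b m j.+1 n.+1 < -1.
  by case: (boolP (pos j.+1 n.+1)) => h; [left; apply: pC | right; apply: nC].
have hr : 2 < rho b m j.+2 n.+1 \/ rho b m j.+2 n.+1 < -1.
  by case: (boolP (pos j.+2 n.+1)) => h; [left; apply: pA | right; apply: nA].
have [h1 h2] := prop_step hQ' hr' hr.
split => h.
  by apply: h2; apply: nC.
by apply: h1; apply: pC; rewrite -[pos _ _]negbK.
Qed.
Lemma Gtop_pos m j : 0 < G b m j (m + j).
Proof.
have hQ' := hQ.
elim: j => [|j IH]; first by rewrite (G0n hb); lra.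
rewrite addnS (G_rec hb).
set A := G b m j.+1 (m + j).
have hP : 0 < - (b ^+ (m + j.+1 + (m + j)) * G b m j (m + j)).
  have o : odd (m + j.+1 + (m + j)).
    have -> : (m + j.+1 + (m + j) = ((m + j) + (m + j)).+1)%N by lia.
    by rewrite /= addnn odd_double.
  by rewrite (bpow_odd _ o) mulNr opprK; apply: mulr_gt0 => //; apply: Qpos.
have [hA hr] : A != 0 /\ (rho b m j.+1 (m + j) < 0 \/ 1 < rho b m j.+1 (m + j)).
  rewrite /A; case e: (m + j)%N => [|k].
    split; first exact: (Gj0_neq0 hb hb0).
    by left; rewrite rho0; apply: (r0_neg hQ hQ23).
  have [hA [p n']] := inv_all m j k.
  split => //.
  by case: (boolP (pos j.+1 k.+1)) => h; [right; have := p h | left; have := n' h]; lra.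
have e1 := Gnext hA; rewrite -/A in e1.
have e2 : G b m j.+1 (m + j).+1 = A - b ^+ (m + j.+1 + (m + j)) * G b m j (m + j).
  by rewrite (G_rec hb).
rewrite -e2.
set P := - (b ^+ (m + j.+1 + (m + j)) * G b m j (m + j)) in hP.
have e3 : G b m j.+1 (m + j).+1 = A + P by rewrite e2 /P.
set R := rho b m j.+1 (m + j) in hr e1.
set X := G b m j.+1 (m + j).+1 in e1 e3 *.
have hA' : A < 0 \/ 0 < A by move: hA; rewrite neq_lt => /orP.
case: hr => hr; case: hA' => ha; nra.
Qed.

Lemma abs_step m j n : (0 < j)%N -> (0 < n)%N -> `|G b m j n| < `|G b m j n.+1|.
Proof.
case: j => // k _; case: n => // l _.
have [hA [p n']] := inv_all m k l.
rewrite (Gnext hA) [`|_ * G _ _ _ _|]normrM.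
have h1 : 1 < `|rho b m k.+1 l.+1|.
  case: (boolP (pos k.+1 l.+1)) => h.
    by have := p h => hh; rewrite gtr0_norm; lra.
  by have := n' h => hh; rewrite ltr0_norm; lra.
have h2 : 0 < `|G b m k.+1 l.+1| by rewrite normr_gt0.
nra.
Qed.

Lemma abs_chain m j n n' : (0 < j)%N -> (0 < n)%N -> (n < n')%N -> `|G b m j n| < `|G b m j n'|.
Proof.
move=> hj hn; elim: n' => // n' IH hn'.
case: (ltngtP n n') => h.
- by apply: lt_trans (IH h) _; apply: abs_step => //; lia.
- lia.
- by subst n'; apply: abs_step.
Qed.

Lemma abs_01 m j : (0 < j)%N -> (3 <= Q \/ (0 < m)%N /\ odd j) -> `|G b m j 0| < `|G b m j 1|.
Proof.
case: j => // k _ hh.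
have hr := r0_lt hQ hQ23 (isT : (0 < k.+1)%N) hh.
have hG := Gj0_neq0 hb hb0 m k.+1.
rewrite (Gj1 hb hb0) [`|_ * G _ _ _ _|]normrM ltr0_norm; last lra.
have h2 : 0 < `|G b m k.+1 0| by rewrite normr_gt0.
nra.
Qed.

Lemma abs_02 m j : (1 < j)%N -> `|G b m j 0| < `|G b m j 2|.
Proof.
case: j => [|[|k]] // _.
have hQ' := hQ.
have hG0 := Gj0_neq0 hb hb0 m k.+2.
have hG0' := Gj0_neq0 hb hb0 m k.+1.
have hr2 := r0_neg hQ hQ23 m (isT : (0 < k.+2)%N).
have hr1 := r0_neg hQ hQ23 m (isT : (0 < k.+1)%N).
have hG1 : G b m k.+2 1 != 0.
  by rewrite (Gj1 hb hb0) mulf_neq0 //; apply/eqP; lra.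
rewrite (Gnext hG1) (rho_rec hb hG0' hG0 hG1) !rho0 (Gj1 hb hb0).
rewrite mulrA [`|_ * G _ _ _ _|]normrM.
set r := r0 b m k.+2; set r' := r0 b m k.+1.
have key : 1 < `|(1 + b * r' * (r - 1) / r) * r|.
  rewrite mulrC; apply: E4gen => //; first exact: hQ0.
  case: (boolP [&& q == 2%N, k.+1 == 2%N & odd m]) => hs.
    case/and3P: hs => /eqP eq2 /eqP ej om.
    have eQ : Q = 2 by rewrite eq2.
    right; rewrite /r; have -> : k.+2 = 3%N by lia.
    by have [h _] := r0_special hQ hQ23 eQ om.
  left; apply: (r0_Q hQ hQ23) => // [[eQ [ej om]]].
  move/negP: hs; apply; apply/and3P; split => //; last by apply/eqP.
  by apply/eqP; apply/eqP; rewrite -(eqr_nat rat) eQ.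
have h2 : 0 < `|G b m k.+2 0| by rewrite normr_gt0.
nra.
Qed.
End Main.

Lemma neg_abs_le (x : rat) : - `|x| <= x.
Proof. have := ler_norm (- x); rewrite normrN; lra. Qed.

Unset Implicit Arguments. Set Strict Implicit.

Theorem theorem5p10 (q d j : nat) :
  prime_power q -> (2 <= q)%N -> (6 <= d)%N -> (1 <= j)%N -> (j <= d)%N ->
  (* (i) *)
  (forall i : nat, (i <= d - 1)%N ->
     ~ [/\ q = 2%N, i = (d - 1)%N & (j = d \/ ~~ odd j)] ->
     `|Qeig q d j (i.+1)| < `|Qeig q d j i|) /\
  (* (ii) *)
  (odd j -> forall i : nat, (i <= d)%N -> Qeig q d j 1 <= Qeig q d j i) /\
  (* (iii) *)
  (~~ odd j -> forall i : nat, (i <= d)%N ->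
     Qeig q d j (d - j + 2) <= Qeig q d j i) /\
  (* (iv) *)
  (forall i : nat, (2 <= i)%N -> (i <= d)%N ->
     `|Qeig q d j i| < `|Qeig q d j 1|).
Proof.
move=> _ hq hd hj1 hjd.
set m := (d - j)%N.
have hdm : d = (m + j)%N by rewrite /m; lia.
have QE : forall i, Qeig q d j i = G (- q%:R) m j (d - i) by move=> i; exact: Qeig_G.
have hQ3 : q <> 2%N -> 3 <= (q%:R : rat).
  by move=> h; rewrite (ler_nat _ 3 q); lia.
have iv : forall i : nat, (2 <= i)%N -> (i <= d)%N -> `|Qeig q d j i| < `|Qeig q d j 1|.
  move=> i hi2 hid; rewrite !QE.
  case: (posnP (d - i)) => hn.
    rewrite hn.
    case: (ltngtP j 1) => hj; first lia.
      apply: lt_trans (abs_02 hq m hj) _.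
      by apply: abs_chain => //; lia.
    subst j.
    apply: lt_trans (abs_01 hq (isT : (0 < 1)%N) _) _.
      by right; split => //; rewrite /m; lia.
    by apply: abs_chain => //; lia.
  by apply: abs_chain => //; lia.
split.
  move=> i hi hex; rewrite !QE.
  have -> : (d - i = (d - i.+1).+1)%N by lia.
  case: (posnP (d - i.+1)) => hn.
    rewrite hn; apply: abs_01 => //.
    case: (eqVneq q 2) => e2; last by left; apply: hQ3; apply/eqP.
    right; split.
      rewrite /m; case: (ltngtP j d) => h; try lia.
      by exfalso; apply: hex; split => //; [lia | left].
    case: (boolP (odd j)) => // oj.
    by exfalso; apply: hex; split => //; [lia | right].
  by apply: abs_step.
split.
  move=> oj i hid.
  have top := Gtop_pos hq m j; rewrite -hdm in top.
  have [k ek] : exists k, j = k.+1 by exists j.-1; lia.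
  have [l el] : exists l, (d - 1)%N = l.+1 by exists (d - 2)%N; lia.
  have [hG [p n']] := inv_all hq m k l.
  have hp : ~~ pos k.+1 l.+1.
    rewrite /pos -ek; case: ifP => h; first by rewrite oj.
    have ejd : j = d by lia.
    have -> : l.+1 = k by lia.
    by move: oj; rewrite ek /= => /negbTE ->.
  have hr := n' hp.
  have e := Gnext hG.
  have hd2 : (l.+2 = d)%N by lia.
  rewrite -ek hd2 -el in e; rewrite -ek -el in hr hG.
  set g1 := G (- q%:R) m j (d - 1) in hr hG e *.
  set R := rho (- q%:R) m j (d - 1) in hr e.
  have neg : g1 < 0 by nra.
  rewrite !QE.
  case: (posnP i) => [->|hi0]; first by rewrite subn0 -/g1; lra.
  case: (ltngtP i 1) => h1; [lia | | by subst i].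
  have := iv i h1 hid; rewrite !QE -/g1 => hlt.
  rewrite (ltr0_norm neg) in hlt.
  have := neg_abs_le (G (- q%:R) m j (d - i)); lra.
split; last exact: iv.
move=> ej i hid.
have hj2 : (2 <= j)%N by case: (ltngtP j 1) => h; [lia | done | by subst j].
have [k ek] : exists k, j = k.+1 by exists j.-1; lia.
have top := Gtop_pos hq m j; rewrite -hdm in top.
have posG : forall t, (t <= d - (j - 1))%N -> 0 < G (- q%:R) m j (d - t).
  elim => [_|t IH ht]; first by rewrite subn0.
  have := IH (ltnW ht).
  have [l el] : exists l, (d - t.+1 = l.+1)%N by exists (d - t.+2)%N; lia.
  have -> : (d - t = l.+2)%N by lia.
  rewrite el.
  have [hG [p _]] := inv_all hq m k l.
  have hp : pos k.+1 l.+1.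
    rewrite /pos -ek; case: ifP => h //.
    have -> : l.+1 = k by lia.
    by move: ej; rewrite ek /= negbK.
  have hr := p hp.
  rewrite ek (Gnext hG).
  set g := G (- q%:R) m k.+1 l.+1 in hG *.
  nra.
have pj1 : 0 < G (- q%:R) m j (j - 1).
  have := posG (d - (j - 1))%N (leqnn _).
  by have -> : (d - (d - (j - 1)) = j - 1)%N by lia.
have negj2 : G (- q%:R) m j (j - 2) < 0.
  have [hG hr] : G (- q%:R) m j (j - 2) != 0 /\ rho (- q%:R) m j (j - 2) < 0.
    case: (ltngtP j 2) => h; first lia.
      have [l el] : exists l, (j - 2 = l.+1)%N by exists (j - 3)%N; lia.
      rewrite el.
      have [hG [_ n']] := inv_all hq m k l.
      have hp : ~~ pos k.+1 l.+1.
        rewrite /pos; case: ifP => h'; first lia.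
        have -> : l.+1 = k.-1 by lia.
        move: ej; rewrite ek /=.
        by case: k ek el h' hG n' => [|[|k]] //= _ _ _ _ _; rewrite negbK.
      have := n' hp; rewrite -ek => hh; split; [by rewrite -ek in hG | lra].
    have ek2 : k = 1%N by lia.
    subst k; rewrite ek /=.
    split; first exact: (Gj0_neq0 (hbQ (hQ hq)) (hbQ0 (hQ hq)) m 2).
    by rewrite (rho0 hq); apply: (r0_neg (hQ hq) (hQ23 hq)).
  have e := Gnext hG.
  have e2 : (j - 2).+1 = (j - 1)%N by lia.
  rewrite e2 in e; rewrite e in pj1.
  set g := G (- q%:R) m j (j - 2) in hG pj1 *.
  nra.
have absj2 : forall n, (n <= j - 2)%N -> `|G (- q%:R) m j n| <= `|G (- q%:R) m j (j - 2)|.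
  move=> n hn; case: (ltngtP n (j - 2)) => h; [|lia|by rewrite h].
  case: (posnP n) => [->|hn0].
    have h02 := abs_02 hq m hj2.
    apply: ltW; apply: lt_le_trans h02 _.
    case: (ltngtP 2 (j - 2)) => h2; [apply: ltW; apply: abs_chain => //; lia | lia | by rewrite -h2].
  by apply: ltW; apply: abs_chain => //.
rewrite !QE.
have -> : (d - (d - j + 2) = j - 2)%N by lia.
case: (leqP (j - 1) (d - i)) => hn.
  have := posG i ltac:(lia); lra.
have := absj2 (d - i)%N ltac:(lia).
rewrite (ltr0_norm negj2).
have := neg_abs_le (G (- q%:R) m j (d - i)); lra.
Qed.
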